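(* Suppose (S) and (L) hold and: (MA1) $\operatorname{cov}(W_i^K,W_j^K)=\mathbb 1(i=j)+\rho\mathbb 1(|i-j|=1)$ for $i,j\in\{1,\dots,K\}$, with $|\rho|<1/2$; (MA2) there is $C<\infty$ with $\sup_{i\le K}|\pi_i^K|\le C/\sqrt K$ for all $K$; (MA3) $\rho\sum_{i=1}^{K-1}\pi_i^K\pi_{i+1}^K/\sum_{i=1}^K(\pi_i^K)^2$ converges to a value in $[-\infty,\infty]$ as $K\to\infty$; (MA4) there is $\epsilon>0$ with $\operatorname{var}(\sum_{i=1}^K\pi_i^KW_i^K)>\epsilon$ for all $K$. Then (P) holds.
   Context: For each $K$, $W^K=(W_1^K,\dots,W_K^K)$ is a random vector and $\pi^K\in\mathbb R^K$. $S\in\{0,1\}^K$ is random, independent of everything else, with moments $\operatorname{var}_S$ etc.; $d_1=\sum_iS_i$, $d_2=K-d_1$. (S) $S$ is uniform over vectors in $\{0,1\}^K$ with exactly $d_1$ ones. (L) $d_1,K\to\infty$ with $d_2/d_1\to r\in(0,\infty)$. (P): (P1) there are $0<\epsilon\le M<\infty$ with $\epsilon\le\operatorname{var}(\sum_i\pi_i^KW_i^K)\le M$ for all $K$; (P2) $\operatorname{var}_S(\sum_{i,j}S_iS_j\operatorname{cov}(\pi_i^KW_i^K,\pi_j^KW_j^K))\to0$ and the same with $S_i,S_j$ replaced by $1-S_i,1-S_j$; (P3) $\sum_i\operatorname{var}(\pi_i^KW_i^K)/\operatorname{var}(\sum_i\pi_i^KW_i^K)$ converges to a finite limit. *)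

(* Defs.v *)
From HB Require Import structures.
From mathcomp Require Import all_boot all_order all_algebra.
From mathcomp Require Import all_classical all_reals all_analysis.
Set Implicit Arguments. Unset Strict Implicit. Unset Printing Implicit Defensive.
Import Order.TTheory GRing.Theory Num.Theory.
Local Open Scope ring_scope.

(* The law of S under (S): uniform over the vectors s in {0,1}^K with
   exactly d1 ones (encoded as boolean finite functions on 'I_K). *)
Definition Svecs (K d1 : nat) : {set {ffun 'I_K -> bool}} :=
  [set s : {ffun 'I_K -> bool} | #|[set i | s i]| == d1].

Definition meanS {R : realType} (K d1 : nat) (f : {ffun 'I_K -> bool} -> R) : R :=
  (#|Svecs K d1|%:R)^-1 * \sum_(s in Svecs K d1) f s.

Definition varS {R : realType} (K d1 : nat) (f : {ffun 'I_K -> bool} -> R) : R :=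
  meanS d1 (fun s => (f s - meanS d1 f) ^+ 2).

(* Main.v *)
Set Warnings "-notation-overridden,-ambiguous-paths,-notation-incompatible-prefix,-deprecated".
Require Import Defs.
From HB Require Import structures.
From mathcomp Require Import all_boot all_order all_algebra.
From mathcomp Require Import all_classical all_reals all_analysis.
From mathcomp Require Import ring lra zify.
Import Order.TTheory GRing.Theory Num.Theory.
Import numFieldNormedType.Exports.
Local Open Scope classical_set_scope.
Local Open Scope ring_scope.
Local Close Scope classical_set_scope.

Section Prob.
Context (R : realType) (d : measure_display) (T : measurableType d) (P : probability T R).

Lemma L2_scale (X : T -> R) a : X \in Lfun P 2%:E -> (fun t => a * X t) \in Lfun P 2%:E.
Proof.
move=> h; have -> : (fun t => a * X t) = (a \o* X)%R by apply/funext => t; rewrite /= mulrC.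
exact: (@Lfun_scale _ _ _ P X a 2 (ler1n _ 2) h). Qed.

Lemma cov_scale (X Y : T -> R) a b : X \in Lfun P 2%:E -> Y \in Lfun P 2%:E ->
  covariance P (fun t => a * X t) (fun t => b * Y t) = ((a * b)%:E * covariance P X Y)%E.
Proof.
move=> hX hY.
have Pfin : P setT \is a fin_num := fin_num_measure P _ measurableT.
have X1 := Lfun_subset12 Pfin hX.
have Y1 := Lfun_subset12 Pfin hY.
have XY1 := Lfun2_mul_Lfun1 hX hY.
have aX2 : (a \o* X)%R \in Lfun P 2%:E := @Lfun_scale _ _ _ P X a 2 (ler1n _ 2) hX.
have aX1 := Lfun_subset12 Pfin aX2.
have aXY1 := Lfun2_mul_Lfun1 aX2 hY.
have -> : (fun t => a * X t) = (a \o* X)%R by apply/funext => t; rewrite /= mulrC.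
have -> : (fun t => b * Y t) = (b \o* Y)%R by apply/funext => t; rewrite /= mulrC.
rewrite (covarianceZr b aX1 Y1 aXY1) (covarianceZl a X1 Y1 XY1).
by rewrite muleA -EFinM mulrC.
Qed.

Lemma sum_L2 (f : nat -> T -> R) n : (forall i, (i < n)%N -> f i \in Lfun P 2%:E) ->
  (fun t => \sum_(0 <= i < n) f i t) \in Lfun P 2%:E.
Proof.
elim: n => [|n IH] h.
  have -> : (fun t => \sum_(0 <= i < 0) f i t) = cst 0 by apply/funext => t; rewrite big_nil.
  exact: Lfun_cst.
have -> : (fun t => \sum_(0 <= i < n.+1) f i t) = ((fun t => \sum_(0 <= i < n) f i t) \+ f n)%R.
  by apply/funext => t; rewrite big_nat_recr.
apply: rpredD; first by rewrite lee1n.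
  by move=> ?; exact: (IH (fun i hi => h i (ltnW hi))).
by move=> ?; exact: h.
Qed.

Lemma cov_sum_l (f : nat -> T -> R) n Y : (forall i, (i < n)%N -> f i \in Lfun P 2%:E) ->
  Y \in Lfun P 2%:E ->
  covariance P (fun t => \sum_(0 <= i < n) f i t) Y = (\sum_(0 <= i < n) covariance P (f i) Y)%E.
Proof.
elim: n => [|n IH] h hY.
  have -> : (fun t => \sum_(0 <= i < 0) f i t) = cst 0 by apply/funext => t; rewrite big_nil.
  by rewrite covariance_cst_l big_nil.
have -> : (fun t => \sum_(0 <= i < n.+1) f i t) = ((fun t => \sum_(0 <= i < n) f i t) \+ f n)%R.
  by apply/funext => t; rewrite big_nat_recr.
have h' : forall i, (i < n)%N -> f i \in Lfun P 2%:E by move=> i hi; apply: h; exact: ltnW.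
rewrite covarianceDl //; [|exact: sum_L2|exact: h].
by rewrite IH // big_nat_recr.
Qed.
End Prob.


Section RealAlg.
Context (R : realType).
Definition c0 (rho : R) (i j : nat) : R := (i == j)%:R + rho * ((i.+1 == j) || (j.+1 == i))%:R.
Definition AA (p : nat -> R) n := \sum_(0 <= i < n) p i ^+ 2.
Definition BB (p : nat -> R) n := \sum_(0 <= i < n.-1) p i * p i.+1.
Definition VV rho (p : nat -> R) n := \sum_(0 <= i < n) \sum_(0 <= j < n) p i * p j * c0 rho i j.

Lemma sum_last (p : nat -> R) n : \sum_(0 <= i < n) p i * (i.+1 == n)%:R = if n is m.+1 then p m else 0.
Proof.
case: n => [|m]; first by rewrite big_nil.
rewrite big_nat_recr //= eqxx mulr1 big1_seq ?add0r // => i; rewrite mem_index_iota => /andP[_ hi].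
by rewrite eqSS (ltn_eqF hi) mulr0.
Qed.

Lemma BB_S (p : nat -> R) n : BB p n.+1 = BB p n + (if n is m.+1 then p m * p n else 0).
Proof.
rewrite /BB; case: n => [|m] /=; first by rewrite !big_nil addr0.
by rewrite big_nat_recr.
Qed.

Lemma sum_double_recr (g : nat -> nat -> R) n :
  \sum_(0 <= i < n.+1) \sum_(0 <= j < n.+1) g i j =
  \sum_(0 <= i < n) \sum_(0 <= j < n) g i j + \sum_(0 <= i < n) g i n + \sum_(0 <= j < n) g n j + g n n.
Proof.
rewrite big_nat_recr //= big_nat_recr //=.
rewrite (eq_bigr (fun i => \sum_(0 <= j < n) g i j + g i n)); last by move=> i _; rewrite big_nat_recr.
by rewrite big_split /= !addrA.
Qed.

Lemma VV_eq rho p n : VV rho p n = AA p n + 2 * rho * BB p n.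
Proof.
elim: n => [|n IH]; first by rewrite /VV /AA /BB !big_nil mulr0 addr0.
rewrite /VV sum_double_recr -/(VV rho p n) IH /AA big_nat_recr //= -/(AA p n) BB_S.
have E1 : \sum_(0 <= i < n) p i * p n * c0 rho i n = rho * p n * \sum_(0 <= i < n) p i * (i.+1 == n)%:R.
  rewrite big_distrr /=; apply: eq_big_nat => i /andP[_ hi].
  rewrite /c0 (ltn_eqF hi).
  have -> : (n.+1 == i) = false by apply/negbTE; rewrite neq_ltn (ltn_trans hi (ltnSn n)) orbT.
  rewrite orbF add0r /=.
generalize ((i.+1 == n)%:R : R) => b; ring.
have E2 : \sum_(0 <= j < n) p n * p j * c0 rho n j = rho * p n * \sum_(0 <= i < n) p i * (i.+1 == n)%:R.
  rewrite big_distrr /=; apply: eq_big_nat => i /andP[_ hi].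
  rewrite /c0 (gtn_eqF hi).
  have -> : (n.+1 == i) = false by apply/negbTE; rewrite neq_ltn (ltn_trans hi (ltnSn n)) orbT.
  rewrite add0r /=.
generalize ((i.+1 == n)%:R : R) => b; ring.
rewrite E1 E2 sum_last /c0 eqxx.
have -> : (n.+1 == n) || (n.+1 == n) = false by rewrite (gtn_eqF (ltnSn n)).
rewrite /= mulr0 addr0 mulr1.
case: n {IH E1 E2} => [|m]; rewrite ?mulr0 ?addr0 ?expr2; ring.
Qed.

Lemma BB_le p n : `|BB p n| <= AA p n.
Proof.
case: n => [|n]; first by rewrite /BB /AA !big_nil normr0.
rewrite /BB /=.
apply: (le_trans (ler_norm_sum _ _ _)).
have h : forall i, `|p i * p i.+1| <= (p i ^+ 2 + p i.+1 ^+ 2) / 2.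
  move=> i; rewrite normrM.
  rewrite -[p i ^+ 2]real_normK ?num_real // -[p i.+1 ^+ 2]real_normK ?num_real //.
  move: (`|p i|) (`|p i.+1|) => x y.
  have := sqr_ge0 (x - y); rewrite sqrrB => H.
  rewrite ler_pdivlMr //; lra.
apply: (le_trans (ler_sum _ (fun i _ => h i))).
rewrite -big_distrl /= big_split /=.
have H1 : \sum_(0 <= i < n) p i ^+ 2 <= AA p n.+1.
  rewrite /AA big_nat_recr //= lerDl; exact: sqr_ge0.
have H2 : \sum_(0 <= i < n) p i.+1 ^+ 2 <= AA p n.+1.
  by rewrite /AA big_nat_recl //= lerDr sqr_ge0.
rewrite ler_pdivrMr //; lra.
Qed.
End RealAlg.


Lemma card_sup K d (A : {set 'I_K}) :
  #|[set s in Svecs K d | A \subset [set i | s i]]| =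
  if (#|A| <= d)%N then 'C(K - #|A|, d - #|A|) else 0%N.
Proof.
set X := [set s in Svecs K d | A \subset [set i | s i]].
have HX s : (s \in X) = (#|[set i | s i]| == d) && (A \subset [set i | s i]).
  by rewrite /X /Svecs !inE.
case: ifP => hA; last first.
  apply/eqP; rewrite cards_eq0; apply/eqP/setP => s; rewrite HX inE.
  apply/negbTE/negP => /andP[/eqP hd hsub].
  by move: (subset_leq_card hsub); rewrite hd hA.
pose phi (s : {ffun 'I_K -> bool}) := [set i | s i] :\: A.
have inj : {in X &, injective phi}.
  move=> s s'; rewrite !HX => /andP[_ hs] /andP[_ hs'] e; apply/ffunP => i.
  case hi : (i \in A).
    by move/fintype.subsetP: hs => /(_ i hi); rewrite inE => ->; move/fintype.subsetP: hs' => /(_ i hi); rewrite inE => ->.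
  have := congr1 (fun B : {set 'I_K} => i \in B) e; rewrite /phi /= !inE hi /=.
  done.
rewrite -(card_in_imset inj).
have -> : [set phi x | x in X] = [set C : {set 'I_K} | C \subset ~: A & #|C| == (d - #|A|)%N].
  apply/setP => C; apply/imsetP/idP.
    move=> [s]; rewrite HX => /andP[/eqP hd hs] ->; rewrite inE; apply/andP; split.
      by apply/fintype.subsetP => i; rewrite !inE => /andP[-> _].
    by rewrite /phi cardsD (finset.setIidPr hs) hd.
  rewrite inE => /andP[hC /eqP hc].
  exists [ffun i => (i \in C) || (i \in A)].
    rewrite HX; apply/andP; split.
      have -> : [set i | [ffun i => (i \in C) || (i \in A)] i] = C :|: A.
        by apply/setP => i; rewrite !inE ffunE.
      rewrite cardsU hc.
      have -> : C :&: A = finset.set0.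
        apply/setP => i; rewrite !inE; apply/negbTE/negP => /andP[hiC hiA].
        by move/fintype.subsetP: hC => /(_ i hiC); rewrite inE hiA.
      by rewrite cards0 subn0 subnK.
    by apply/fintype.subsetP => i hi; rewrite inE ffunE hi orbT.
  apply/setP => i; rewrite /phi !inE ffunE.
  case hiA : (i \in A); rewrite /= ?andbF ?andbT ?orbF //.
  apply/negbTE/negP => hiC; move/fintype.subsetP: hC => /(_ i hiC); rewrite inE hiA //.
rewrite cards_draws; congr 'C(_, _).
have h2 : #|~: A| = (#|'I_K| - #|A|)%N by rewrite -(cardsC A) addKn.
by rewrite h2 card_ord.
Qed.


Definition qn K d m : nat := if (m <= d)%N then 'C(K - m, d - m) else 0%N.

Lemma qn_rec K d m : (m < K)%N -> (qn K d m.+1 * (K - m) = qn K d m * (d - m))%N.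
Proof.
move=> hmK; rewrite /qn.
case: (ltngtP m d) => h.
  rewrite mulnC.
  have -> : (K - m.+1 = (K - m).-1)%N by rewrite subnS.
  have e : (d - m = (d - m.+1).+1)%N by rewrite subnSK.
  by rewrite mul_bin_diag e mulnC.
- by rewrite !mul0n.
- by rewrite h subnn !muln0 mul0n.
Qed.

Section QR.
Context (R : realType).
Definition Qr K d m : R := (qn K d m)%:R / (qn K d 0)%:R.

Lemma qn0_gt0 K d : (d <= K)%N -> (0 < qn K d 0)%N.
Proof. by move=> h; rewrite /qn leq0n !subn0 bin_gt0. Qed.

Lemma Qr_rec K d m : (m < K)%N -> (d <= K)%N ->
  Qr K d m.+1 = Qr K d m * ((d - m)%:R / (K - m)%:R).
Proof.
move=> hm hd; rewrite /Qr.
have h0 : (qn K d 0)%:R != 0 :> R by rewrite pnatr_eq0 -lt0n qn0_gt0.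
have h1 : (K - m)%:R != 0 :> R by rewrite pnatr_eq0 subn_eq0 -ltnNge.
have := @qn_rec K d m hm => /(congr1 (fun n => n%:R : R)); rewrite !natrM => e.
apply: (mulIf h1); rewrite mulrAC e; field.
by rewrite h0 h1.
Qed.

Lemma Qr_01 K d m : (m <= K)%N -> (d <= K)%N -> 0 <= Qr K d m <= 1.
Proof.
move=> hm hd; elim: m hm => [|m IH] hm.
  rewrite /Qr divff ?ler01 ?lexx //.
  by rewrite pnatr_eq0 -lt0n qn0_gt0.
have hmK : (m < K)%N by [].
rewrite Qr_rec //; have /andP[q0 q1] := IH (ltnW hm).
have hr : 0 <= (d - m)%:R / (K - m)%:R :> R by apply: divr_ge0.
have hr1 : (d - m)%:R / (K - m)%:R <= 1 :> R.
  rewrite ler_pdivrMr ?ltr0n ?subn_gt0 // mul1r ler_nat.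
  exact: leq_sub2r.
apply/andP; split; first exact: mulr_ge0.
exact: mulr_ile1.
Qed.

Lemma ratio_close (K d m : nat) : (0 < K)%N -> (d <= K)%N -> (2 * m <= K)%N -> (m < K)%N ->
  `|(d - m)%:R / (K - m)%:R - d%:R / K%:R| <= 2 * m%:R / K%:R :> R.
Proof.
move=> hK hd h2m hmK.
have kpos : 0 < K%:R :> R by rewrite ltr0n.
have kmpos : 0 < (K - m)%:R :> R by rewrite ltr0n subn_gt0.
have ekm : (K - m)%:R = K%:R - m%:R :> R by rewrite natrB // ltnW.
have h2 : 2 * m%:R <= K%:R :> R by rewrite -(natrM R 2 m) ler_nat.
case: (leqP m d) => hmd.
  rewrite natrB //.
  have E : (d%:R - m%:R) / (K - m)%:R - d%:R / K%:R =
      - (m%:R * ((K%:R - d%:R) / K%:R)) / (K - m)%:R :> R.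
    rewrite ekm; field; apply/andP; split; rewrite ?lt0r_neq0 //; rewrite -ekm //.
  have hKd : 0 <= (K%:R - d%:R) / K%:R :> R by rewrite divr_ge0 // subr_ge0 ler_nat.
  have hKd1 : (K%:R - d%:R) / K%:R <= 1 :> R.
    by rewrite ler_pdivrMr // mul1r lerBlDr lerDl.
  rewrite E mulNr normrN ger0_norm; last by rewrite divr_ge0 // mulr_ge0.
  have m0 : 0 <= m%:R :> R by [].
  apply: (@le_trans _ _ (m%:R / (K - m)%:R)).
    apply: ler_wpM2r; [by rewrite invr_ge0 ltW | exact: ler_piMr].
  rewrite ler_pdivrMr // mulrAC ler_pdivlMr // ekm.
  have hh : 0 <= K%:R - 2 * m%:R :> R by rewrite subr_ge0.
  have := mulr_ge0 m0 hh. lra.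
have -> : (d - m)%N = 0%N by apply/eqP; rewrite subn_eq0 ltnW.
rewrite mul0r add0r normrN ger0_norm ?divr_ge0 //.
rewrite ler_pM2r ?invr_gt0 //.
have : d%:R <= m%:R :> R by rewrite ler_nat ltnW.
have : 0 <= m%:R :> R by [].
lra.
Qed.

Lemma Qr_close K d m : (0 < K)%N -> (d <= K)%N -> (2 * m <= K)%N ->
  `|Qr K d m - (d%:R / K%:R) ^+ m| <= 2 * (m%:R) ^+ 2 / K%:R :> R.
Proof.
move=> hK hd; elim: m => [|m IH] hm.
  rewrite /Qr divff ?expr0 ?subrr ?normr0 ?mulr0 ?mul0r //.
  by rewrite pnatr_eq0 -lt0n qn0_gt0.
have hmK : (m < K)%N by lia.
have hm' : (2 * m <= K)%N by lia.
have kpos : 0 < K%:R :> R by rewrite ltr0n.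
set x := d%:R / K%:R : R.
set r := (d - m)%:R / (K - m)%:R : R.
have x0 : 0 <= x by rewrite divr_ge0.
have x1 : x <= 1 by rewrite ler_pdivrMr // mul1r ler_nat.
have /andP[q0 q1] := @Qr_01 K d m (ltnW hmK) hd.
have E : Qr K d m.+1 - x ^+ m.+1 = Qr K d m * (r - x) + x * (Qr K d m - x ^+ m).
  by rewrite Qr_rec // exprSr /r; ring.
rewrite E; apply: (le_trans (ler_normD _ _)); rewrite (normrM (Qr K d m)) (normrM x).
have h1 : `|Qr K d m| * `|r - x| <= 2 * m%:R / K%:R.
  rewrite ger0_norm // -[X in _ <= X]mul1r; apply: ler_pM => //.
  exact: ratio_close.
have h2 : `|x| * `|Qr K d m - x ^+ m| <= 2 * m%:R ^+ 2 / K%:R.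
  rewrite ger0_norm // -[X in _ <= X]mul1r; apply: ler_pM => //; exact: IH.
apply: (le_trans (lerD h1 h2)).
rewrite -mulrDl ler_pM2r ?invr_gt0 // -natr1.
have : 0 <= m%:R :> R by []. nra.
Qed.
End QR.


Section Mean.
Context (R : realType) (K d : nat).
Local Notation F := {ffun 'I_K -> bool}.

Lemma card_Svecs : #|Svecs K d| = qn K d 0.
Proof.
have := card_sup K d (finset.set0 : {set 'I_K}); rewrite cards0 /qn => <-.
by apply: eq_card => s; rewrite !inE finset.sub0set andbT.
Qed.

Lemma meanS_ind (A : {set 'I_K}) :
  meanS d (fun s : F => (A \subset [set x | s x])%:R) = Qr R K d #|A|.
Proof.
rewrite /meanS /Qr card_Svecs mulrC; congr (_ / _).
rewrite /qn -card_sup -sum1_card natr_sum [RHS]big_mkcond [LHS]big_mkcond.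
apply: eq_bigr => s _; rewrite !inE; case: (A \subset [set x | s x]); rewrite ?andbT ?andbF; by case: ifP.
Qed.

Lemma meanS_sum (I : finType) (G : I -> F -> R) :
  meanS d (fun s => \sum_(i : I) G i s) = \sum_(i : I) meanS d (G i).
Proof. by rewrite /meanS exchange_big big_distrr. Qed.

Lemma meanS_scale k (G : F -> R) : meanS d (fun s => k * G s) = k * meanS d G.
Proof. by rewrite /meanS -big_distrr /= mulrCA. Qed.

Lemma varS_eq (G : F -> R) : (d <= K)%N ->
  varS d G = meanS d (fun s => G s ^+ 2) - (meanS d G) ^+ 2.
Proof.
move=> hd; rewrite /varS.
set m := meanS d G.
have n0 : (#|Svecs K d|%:R : R) != 0 by rewrite card_Svecs pnatr_eq0 -lt0n qn0_gt0.
have -> : (fun s => (G s - m) ^+ 2) = (fun s => G s ^+ 2 + ((- (2 * m)) * G s + m ^+ 2)).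
  by apply/funext => s; rewrite sqrrB; ring.
rewrite /meanS big_split /= big_split /= -big_distrr /= sumr_const -/(meanS d (fun s => G s ^+ 2)).
rewrite /m /meanS; field.
done.
Qed.
End Mean.


Section VB.
Context (R : realType).

Lemma Qr_prod K d a b : (0 < K)%N -> (d <= K)%N -> (2 * (a + b) <= K)%N ->
  `|Qr R K d (a + b) - Qr R K d a * Qr R K d b| <=
    2 * ((a + b)%:R) ^+ 2 / K%:R + 2 * (a%:R) ^+ 2 / K%:R + 2 * (b%:R) ^+ 2 / K%:R.
Proof.
move=> hK hd hab.
set x := d%:R / K%:R : R.
have kpos : 0 < K%:R :> R by rewrite ltr0n.
have x0 : 0 <= x by rewrite divr_ge0.
have x1 : x <= 1 by rewrite ler_pdivrMr // mul1r ler_nat.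
have /andP[qa0 qa1] := @Qr_01 R K d a ltac:(lia) hd.
have /andP[qb0 qb1] := @Qr_01 R K d b ltac:(lia) hd.
have ea := @Qr_close R K d a hK hd ltac:(lia).
have eb := @Qr_close R K d b hK hd ltac:(lia).
have eab := @Qr_close R K d (a + b) hK hd hab.
have E : Qr R K d (a + b) - Qr R K d a * Qr R K d b =
  (Qr R K d (a + b) - x ^+ (a + b)) + Qr R K d b * (x ^+ a - Qr R K d a) + x ^+ a * (x ^+ b - Qr R K d b).
  by rewrite exprD; ring.
rewrite E; apply: (le_trans (ler_normD _ _)); apply: lerD.
  apply: (le_trans (ler_normD _ _)); apply: lerD; first exact: eab.
  rewrite normrM; apply: (le_trans (y := 1 * `|x ^+ a - Qr R K d a|)).
    by apply: ler_wpM2r => //; rewrite ger0_norm.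
  by rewrite mul1r distrC.
rewrite normrM; apply: (le_trans (y := 1 * `|x ^+ b - Qr R K d b|)).
  apply: ler_wpM2r => //; rewrite normrX ger0_norm //; exact: exprn_ile1.
by rewrite mul1r distrC.
Qed.

Lemma card_A2 K (i j : 'I_K) : (0 < #|[set i; j]| <= 2)%N.
Proof. by rewrite cards2; case: (i != j). Qed.
Arguments card_A2 {K}.

Lemma card_le_K K (A : {set 'I_K}) : (#|A| <= K)%N.
Proof. by rewrite -[X in (_ <= X)%N](card_ord K) max_card. Qed.
Arguments card_le_K {K}.

Definition ov K (i j k l : 'I_K) : R := (k == i)%:R + (k == j)%:R + (l == i)%:R + (l == j)%:R.
Arguments ov {K}.

Lemma Delta_bound K d (i j k l : 'I_K) : (8 <= K)%N -> (d <= K)%N ->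
  `|Qr R K d #|[set i; j] :|: [set k; l]| - Qr R K d #|[set i; j]| * Qr R K d #|[set k; l]| |
    <= 48 / K%:R + ov i j k l.
Proof.
move=> hK hd.
have kpos : 0 < K%:R :> R by rewrite ltr0n; lia.
have ov0 : 0 <= ov i j k l by rewrite /ov; rewrite !addr_ge0.
have /andP[a0 a2] := card_A2 i j.
have /andP[b0 b2] := card_A2 k l.
case: (boolP ([set i; j] :&: [set k; l] == finset.set0)) => hdis.
  rewrite cardsU (eqP hdis) cards0 subn0.
  have HQ := @Qr_prod K d #|[set i; j]| #|[set k; l]| ltac:(lia) hd ltac:(lia).
  apply: (le_trans HQ).
  apply: ler_wpDr => //.
  rewrite -!mulrDl -!mulrDr ler_pM2r ?invr_gt0 //.
  move: a2 b2; move: #|[set i; j]| #|[set k; l]| => a b ha hb.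
  have ha' : a%:R <= 2 :> R by rewrite (ler_nat R a 2).
  have hb' : b%:R <= 2 :> R by rewrite (ler_nat R b 2).
  have : 0 <= a%:R :> R by []. have : 0 <= b%:R :> R by [].
  rewrite natrD; nra.
have key : forall b1 b2 b3 b4 : bool, [|| b1, b2, b3 | b4] -> 1 <= b1%:R + b2%:R + b3%:R + b4%:R :> R.
  by case; case; case; case => //= _; lra.
have ov1 : 1 <= ov i j k l.
  apply: key; move: hdis; case/set0Pn => x; rewrite !inE; case/andP.
  by case/orP => /eqP ->; case/orP => /eqP ->; rewrite eqxx ?orbT.
apply: (le_trans (y := 1)); last first.
  by rewrite -[1]add0r lerD // divr_ge0.
have /andP[u0 u1] := @Qr_01 R K d _ (card_le_K ([set i; j] :|: [set k; l])) hd.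
have /andP[v0 v1] := @Qr_01 R K d _ (card_le_K [set i; j]) hd.
have /andP[w0 w1] := @Qr_01 R K d _ (card_le_K [set k; l]) hd.
have p0 := mulr_ge0 v0 w0.
have p1 := mulr_ile1 v0 w0 v1 w1.
rewrite ler_norml; apply/andP; split; lra.
Qed.
End VB.


Section VF.
Context (R : realType) (K d : nat) (c : 'I_K -> 'I_K -> R).
Local Notation F := {ffun 'I_K -> bool}.
Definition fq (s : F) : R := \sum_(i < K) \sum_(j < K) (s i)%:R * (s j)%:R * c i j.
Local Notation S s := ([set x | s x] : {set 'I_K}).

Lemma ind2 (s : F) (i j : 'I_K) : (s i)%:R * (s j)%:R = ([set i; j] \subset S s)%:R :> R.
Proof.
rewrite finset.subUset !finset.sub1set !inE.
by case: (s i); case: (s j); rewrite /= ?mulr1 ?mulr0 ?mul0r.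
Qed.

Lemma indU (s : F) (A B : {set 'I_K}) :
  (A \subset S s)%:R * (B \subset S s)%:R = (A :|: B \subset S s)%:R :> R.
Proof.
rewrite finset.subUset.
by case: (A \subset S s); case: (B \subset S s); rewrite /= ?mulr1 ?mulr0 ?mul0r.
Qed.

Lemma var_formula : (d <= K)%N ->
  varS d fq = \sum_(i < K) \sum_(j < K) \sum_(k < K) \sum_(l < K)
    c i j * c k l * (Qr R K d #|[set i; j] :|: [set k; l]| - Qr R K d #|[set i; j]| * Qr R K d #|[set k; l]|).
Proof.
move=> hd.
have Hf : fq = fun s => \sum_(i < K) \sum_(j < K) c i j * ([set i; j] \subset S s)%:R.
  apply/funext => s; rewrite /fq; apply: eq_bigr => i _; apply: eq_bigr => j _.
  by rewrite ind2 mulrC.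
have Hf2 : (fun s => fq s ^+ 2) = fun s => \sum_(i < K) \sum_(j < K) \sum_(k < K) \sum_(l < K)
    c i j * c k l * (([set i; j] :|: [set k; l]) \subset S s)%:R.
  apply/funext => s; rewrite Hf expr2 big_distrl /=; apply: eq_bigr => i _.
  rewrite big_distrl /=; apply: eq_bigr => j _.
  rewrite big_distrr /=; apply: eq_bigr => k _.
  rewrite big_distrr /=; apply: eq_bigr => l _.
  by rewrite -(indU s [set i; j] [set k; l]) mulrACA.
have M1 : meanS d fq = \sum_(i < K) \sum_(j < K) c i j * Qr R K d #|[set i; j]|.
  rewrite Hf meanS_sum; apply: eq_bigr => i _.
  rewrite meanS_sum; apply: eq_bigr => j _.
  by rewrite meanS_scale meanS_ind.
have M2 : meanS d (fun s => fq s ^+ 2) = \sum_(i < K) \sum_(j < K) \sum_(k < K) \sum_(l < K)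
    c i j * c k l * Qr R K d #|[set i; j] :|: [set k; l]|.
  rewrite Hf2 meanS_sum; apply: eq_bigr => i _.
  rewrite meanS_sum; apply: eq_bigr => j _.
  rewrite meanS_sum; apply: eq_bigr => k _.
  rewrite meanS_sum; apply: eq_bigr => l _.
  by rewrite meanS_scale meanS_ind.
rewrite varS_eq // M1 M2 expr2 big_distrl /=.
rewrite -sumrB; apply: eq_bigr => i _.
rewrite big_distrl /= -sumrB; apply: eq_bigr => j _.
rewrite big_distrr /= -sumrB; apply: eq_bigr => k _.
rewrite big_distrr /= -sumrB; apply: eq_bigr => l _.
ring.
Qed.
End VF.


Section SB.
Context (R : realType).

Lemma sum_delta_ord K (x : 'I_K) : \sum_(k < K) (k == x)%:R = 1 :> R.
Proof. by rewrite (bigD1 x) //= eqxx big1 ?addr0 // => k /negbTE ->. Qed.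

Lemma delta_inj K (g : nat -> nat) (y : nat) : injective g ->
  \sum_(k < K) (g k == y)%:R <= 1 :> R.
Proof.
move=> ginj.
case: (pickP (fun k : 'I_K => g k == y)) => [k0 hk0 | hnone].
  rewrite (bigD1 k0) //= hk0 big1 ?addr0 // => k hk.
  have -> : (g k == y) = false; last by [].
  apply/negbTE; apply: contra hk => /eqP e; apply/eqP; apply: val_inj; apply: ginj.
  by rewrite e; apply/esym/eqP.
by rewrite big1 ?ler01 // => k _; rewrite hnone.
Qed.

Definition band K (i j : 'I_K) : R :=
  ((i : nat) == j)%:R + ((i : nat).+1 == j)%:R + ((j : nat).+1 == i)%:R.
Arguments band {K}.

Lemma band_ge0 K (i j : 'I_K) : 0 <= band i j.
Proof. by rewrite /band !addr_ge0. Qed.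

Lemma band_row K (i : 'I_K) : \sum_(j < K) band i j <= 3.
Proof.
rewrite /band !big_split /=.
have h1 := @delta_inj K id i (fun x y e => e).
have h2 := @delta_inj K id i.+1 (fun x y e => e).
have h3 := @delta_inj K S i succn_inj.
have e1 : \sum_(j < K) ((i : nat) == j)%:R = \sum_(j < K) (id (j : nat) == i)%:R :> R.
  by apply: eq_bigr => j _; rewrite eq_sym.
have e2 : \sum_(j < K) ((i : nat).+1 == j)%:R = \sum_(j < K) (id (j : nat) == i.+1)%:R :> R.
  by apply: eq_bigr => j _; rewrite eq_sym.
rewrite e1 e2; lra.
Qed.

Lemma band_col K (j : 'I_K) : \sum_(i < K) band i j <= 3.
Proof.
rewrite /band !big_split /=.
have h1 := @delta_inj K id j (fun x y e => e).
have h2 := @delta_inj K S j succn_inj.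
have h3 := @delta_inj K id j.+1 (fun x y e => e).
have e3 : \sum_(i < K) ((j : nat).+1 == i)%:R = \sum_(i < K) (id (i : nat) == j.+1)%:R :> R.
  by apply: eq_bigr => i _; rewrite eq_sym.
rewrite e3; lra.
Qed.

Lemma var_bound K d (c : 'I_K -> 'I_K -> R) (D : R) : (8 <= K)%N -> (d <= K)%N -> 0 <= D ->
  (forall i j, `|c i j| <= D / K%:R * band i j) -> varS d (fq R K c) <= 468 * D ^+ 2 / K%:R.
Proof.
move=> hK hd hD hc.
have kpos : 0 < K%:R :> R by rewrite ltr0n; lia.
set e := D / K%:R.
have e0 : 0 <= e by rewrite divr_ge0 // ltW.
set a := fun i j => `|c i j|.
have a0 : forall i j, 0 <= a i j by move=> i j; rewrite /a normr_ge0.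
have row : forall i, \sum_(j < K) a i j <= 3 * e.
  move=> i; apply: (le_trans (ler_sum _ (fun j _ => hc i j))).
  by rewrite -big_distrr /= mulrC ler_wpM2r // band_row.
have col : forall j, \sum_(i < K) a i j <= 3 * e.
  move=> j; apply: (le_trans (ler_sum _ (fun i _ => hc i j))).
  by rewrite -big_distrr /= mulrC ler_wpM2r // band_col.
have tot : \sum_(i < K) \sum_(j < K) a i j <= 3 * D.
  apply: (le_trans (ler_sum _ (fun i _ => row i))).
  rewrite sumr_const card_ord -mulr_natr /e; rewrite le_eqVlt; apply/orP; left; apply/eqP; field.
  by rewrite lt0r_neq0.
have L1 : forall x : 'I_K, \sum_(k < K) \sum_(l < K) a k l * (k == x)%:R <= 3 * e.
  move=> x.
  have -> : \sum_(k < K) \sum_(l < K) a k l * (k == x)%:R = \sum_(k < K) (k == x)%:R * \sum_(l < K) a k l.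
    apply: eq_bigr => k _; rewrite big_distrr /=; apply: eq_bigr => l _; exact: mulrC.
  apply: (le_trans (y := \sum_(k < K) (k == x)%:R * (3 * e))).
    by apply: ler_sum => k _; apply: ler_wpM2l => //; exact: row.
  by rewrite -big_distrl /= sum_delta_ord mul1r.
have L2 : forall x : 'I_K, \sum_(k < K) \sum_(l < K) a k l * (l == x)%:R <= 3 * e.
  move=> x; rewrite exchange_big /=.
  have -> : \sum_(l < K) \sum_(k < K) a k l * (l == x)%:R = \sum_(l < K) (l == x)%:R * \sum_(k < K) a k l.
    apply: eq_bigr => l _; rewrite big_distrr /=; apply: eq_bigr => k _; exact: mulrC.
  apply: (le_trans (y := \sum_(l < K) (l == x)%:R * (3 * e))).
    by apply: ler_sum => l _; apply: ler_wpM2l => //; exact: col.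
  by rewrite -big_distrl /= sum_delta_ord mul1r.
have inner : forall i j : 'I_K, \sum_(k < K) \sum_(l < K) a k l * (48 / K%:R + ov R K i j k l) <= 156 * e.
  move=> i j.
  have -> : \sum_(k < K) \sum_(l < K) a k l * (48 / K%:R + ov R K i j k l) =
    48 / K%:R * \sum_(k < K) \sum_(l < K) a k l +
    (\sum_(k < K) \sum_(l < K) a k l * (k == i)%:R + \sum_(k < K) \sum_(l < K) a k l * (k == j)%:R +
     \sum_(k < K) \sum_(l < K) a k l * (l == i)%:R + \sum_(k < K) \sum_(l < K) a k l * (l == j)%:R).
    rewrite big_distrr /= -!big_split /=; apply: eq_bigr => k _.
    rewrite big_distrr /= -!big_split /=; apply: eq_bigr => l _.
    rewrite /ov; ring.
  have h48 : 48 / K%:R * \sum_(k < K) \sum_(l < K) a k l <= 144 * e.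
    have -> : 144 * e = 48 / K%:R * (3 * D) by rewrite /e; field; rewrite lt0r_neq0.
    by apply: ler_wpM2l => //; rewrite divr_ge0 // ltW.
  have := L1 i; have := L1 j; have := L2 i; have := L2 j; lra.
apply: (le_trans (y := \sum_(i < K) \sum_(j < K) a i j * (156 * e))).
  rewrite var_formula //; apply: ler_sum => i _; apply: ler_sum => j _.
  apply: (le_trans (y := \sum_(k < K) \sum_(l < K) a i j * (a k l * (48 / K%:R + ov R K i j k l)))).
    apply: ler_sum => k _; apply: ler_sum => l _.
    apply: (le_trans (ler_norm _)); rewrite !normrM -mulrA.
    apply: ler_wpM2l => //; apply: ler_wpM2l => //; exact: Delta_bound.
  have -> : \sum_(k < K) \sum_(l < K) a i j * (a k l * (48 / K%:R + ov R K i j k l)) =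
      a i j * \sum_(k < K) \sum_(l < K) a k l * (48 / K%:R + ov R K i j k l).
    rewrite big_distrr /=; apply: eq_bigr => k _; by rewrite big_distrr.
  by apply: ler_wpM2l => //; exact: inner.
have -> : \sum_(i < K) \sum_(j < K) a i j * (156 * e) = (\sum_(i < K) \sum_(j < K) a i j) * (156 * e).
  rewrite big_distrl /=; apply: eq_bigr => i _; by rewrite big_distrl.
apply: (le_trans (y := 3 * D * (156 * e))).
  by apply: ler_wpM2r => //; rewrite mulr_ge0.
by rewrite /e; rewrite le_eqVlt; apply/orP; left; apply/eqP; field; rewrite lt0r_neq0.
Qed.
End SB.


Section Neg.
Context (R : realType) (K d : nat).
Local Notation F := {ffun 'I_K -> bool}.
Definition negs (s : F) : F := [ffun i => ~~ s i].

Lemma negs_inj : injective negs.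
Proof. by move=> s s' e; apply/ffunP => i; have := congr1 (fun f : F => f i) e; rewrite !ffunE; by case: (s i); case: (s' i). Qed.

Lemma negs_in (s : F) : (d <= K)%N -> (negs s \in Svecs K (K - d)) = (s \in Svecs K d).
Proof.
move=> hd; rewrite /Svecs !inE.
have -> : [set i | negs s i] = ~: [set i | s i] by apply/setP => i; rewrite !inE ffunE.
have h2 : #|~: [set i | s i]| = (#|'I_K| - #|[set i | s i]|)%N by rewrite -(cardsC [set i | s i]) addKn.
rewrite h2 card_ord.
have := @card_le_K K [set i | s i].
move: #|[set i | s i]| => x hx.
apply/eqP/eqP; lia.
Qed.

Lemma meanS_neg (G : F -> R) : (d <= K)%N -> meanS d (fun s => G (negs s)) = meanS (K - d) G.
Proof.
move=> hd; rewrite /meanS !card_Svecs /qn /= !subn0 bin_sub //.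
congr (_ * _); rewrite [RHS](reindex_inj negs_inj) /=.
by apply: eq_bigl => s; rewrite negs_in.
Qed.

Lemma varS_neg (G : F -> R) : (d <= K)%N -> varS d (fun s => G (negs s)) = varS (K - d) G.
Proof.
move=> hd; rewrite /varS meanS_neg //.
exact: (meanS_neg (fun s => (G s - meanS (K - d) G) ^+ 2)).
Qed.
End Neg.

Lemma natr_negb (R : realType) (b : bool) : (~~ b)%:R = 1 - b%:R :> R.
Proof. by case: b; rewrite /= ?subrr ?subr0. Qed.


Arguments sum_L2 {R d T P f n}. Arguments cov_sum_l {R d T P f n Y}. Arguments L2_scale {R d T P X}. Arguments cov_scale {R d T P X Y}.
Arguments c0 {R}. Arguments VV {R}. Arguments AA {R}. Arguments BB {R}.

Section PL.
Context (R : realType) (d : measure_display) (T : measurableType d) (P : probability T R).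

Lemma VV_prob (W : nat -> T -> R) (p : nat -> R) (rho : R) K :
  (forall i, (i < K)%N -> W i \in Lfun P 2%:E) ->
  (forall i j, (i < K)%N -> (j < K)%N -> covariance P (W i) (W j) = (c0 rho i j)%:E) ->
  'V_P[(fun t => \sum_(0 <= i < K) p i * W i t)%R] = (VV rho p K)%:E.
Proof.
move=> hW hc.
have hX : forall i, (i < K)%N -> (fun t => p i * W i t) \in Lfun P 2%:E.
  by move=> i hi; apply: L2_scale; exact: hW.
have hS := sum_L2 hX.
rewrite /variance (cov_sum_l hX hS) /VV -sumEFin.
apply: eq_big_nat => i /andP[_ hi].
rewrite covarianceC (cov_sum_l hX (hX i hi)) -sumEFin.
apply: eq_big_nat => j /andP[_ hj].
rewrite covarianceC cov_scale ?hW // hc // -EFinM.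
Qed.

Lemma AA_prob (W : nat -> T -> R) (p : nat -> R) (rho : R) K :
  (forall i, (i < K)%N -> W i \in Lfun P 2%:E) ->
  (forall i j, (i < K)%N -> (j < K)%N -> covariance P (W i) (W j) = (c0 rho i j)%:E) ->
  (\sum_(0 <= i < K) 'V_P[(fun t => p i * W i t)%R])%E = (AA p K)%:E.
Proof.
move=> hW hc; rewrite /AA -sumEFin; apply: eq_big_nat => i /andP[_ hi].
rewrite /variance cov_scale ?hW // hc // /c0 eqxx.
have -> : (i.+1 == i) || (i.+1 == i) = false by rewrite orbb gtn_eqF.
by rewrite -EFinM /= mulr0 addr0 mulr1 expr2.
Qed.
End PL.

Lemma varS_ge0 (R : realType) K d (f : {ffun 'I_K -> bool} -> R) : 0 <= varS d f.
Proof.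
rewrite /varS /meanS; apply: mulr_ge0; first by rewrite invr_ge0.
by apply: sumr_ge0 => s _; exact: sqr_ge0.
Qed.


Arguments c0 {R}. Arguments VV {R}. Arguments AA {R}. Arguments BB {R}.

Lemma c0_band (R : realType) K (rho : R) (i j : 'I_K) : `|rho| < 2^-1 -> `|c0 rho i j| <= band R K i j.
Proof.
move=> hr; have := hr; rewrite ltr_norml => /andP[h1 h2].
rewrite /c0 /band; case: ((i : nat) == j); case: ((i : nat).+1 == j); case: ((j : nat).+1 == i);
  rewrite /= ?mulr1 ?mulr0 ?addr0 ?add0r ?normr1 ?normr0 //; rewrite ler_norml; apply/andP; split; lra.
Qed.

Lemma P2_bound (R : realType) K d (cc : 'I_K -> 'I_K -> R) (D : R) : (8 <= K)%N -> (d <= K)%N -> 0 <= D ->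
  (forall i j, `|cc i j| <= D / K%:R * band R K i j) ->
  varS d (fun s : {ffun 'I_K -> bool} => \sum_(i < K) \sum_(j < K) (s i)%:R * (s j)%:R * cc i j)
     <= 936 * D ^+ 2 * harmonic K
  /\ varS d (fun s : {ffun 'I_K -> bool} => \sum_(i < K) \sum_(j < K) (1 - (s i)%:R) * (1 - (s j)%:R) * cc i j)
     <= 936 * D ^+ 2 * harmonic K.
Proof.
move=> hK hd hD hc.
have kpos : 0 < K%:R :> R by rewrite ltr0n; lia.
have hh : 468 * D ^+ 2 / K%:R <= 936 * D ^+ 2 * harmonic K.
  rewrite /harmonic /= ler_pdivrMr // mulrAC ler_pdivlMr ?ltr0n // -natr1.
  have hz := sqr_ge0 D; have hk1 : 1 <= K%:R :> R by rewrite ler1n; lia.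
  have hk2 : 0 <= K%:R - 1 :> R by rewrite subr_ge0.
  have := mulr_ge0 hz hk2. lra.
split.
  exact: (le_trans (@var_bound R K d cc D hK hd hD hc) hh).
have -> : (fun s : {ffun 'I_K -> bool} => \sum_(i < K) \sum_(j < K) (1 - (s i)%:R) * (1 - (s j)%:R) * cc i j)
   = (fun s => fq R K cc (@negs K s)).
  apply/funext => s; rewrite /fq; apply: eq_bigr => i _; apply: eq_bigr => j _.
  by rewrite !ffunE !natr_negb.
rewrite varS_neg //.
apply: (le_trans (@var_bound R K (K - d) cc D hK (leq_subr d K) hD hc) hh).
Qed.


Arguments c0 {R}. Arguments VV {R}. Arguments AA {R}. Arguments BB {R}.
Local Open Scope classical_set_scope.

Theorem mainTheorem8 (R : realType) (d : measure_display)
  (T : nat -> measurableType d) (P : forall K, probability (T K) R)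
  (W : forall K, nat -> T K -> R) (pi : nat -> nat -> R)
  (d1 : nat -> nat) (r rho : R) :
  (forall K i, (i < K)%N -> W K i \in Lfun (P K) 2%:E) ->
  (forall K, (d1 K <= K)%N) ->
  ((fun K => (d1 K)%:R : R) @ \oo --> +oo) ->
  (0 < r) ->
  ((fun K => ((K - d1 K)%:R / (d1 K)%:R : R)) @ \oo --> r) ->
  (forall K i j, (i < K)%N -> (j < K)%N ->
     covariance (P K) (W K i) (W K j) =
       ((i == j)%:R + rho * ((i.+1 == j) || (j.+1 == i))%:R)%:E) ->
  `|rho| < 2^-1 ->
  (exists C : R, forall K i, (i < K)%N -> `|pi K i| <= C / Num.sqrt (K%:R)) ->
  (exists l : \bar R,
     (fun K => (rho * (\sum_(0 <= i < K.-1) pi K i * pi K i.+1)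
                 / (\sum_(0 <= i < K) pi K i ^+ 2))%:E) @ \oo --> l) ->
  (exists eps : R, 0 < eps /\ forall K, (0 < K)%N ->
     (eps%:E < 'V_(P K)[(fun t => \sum_(0 <= i < K) pi K i * W K i t)%R])%E) ->
  [/\ (exists eps M : R, 0 < eps /\ eps <= M /\ forall K, (0 < K)%N ->
        (eps%:E <= 'V_(P K)[(fun t => \sum_(0 <= i < K) pi K i * W K i t)%R] <= M%:E)%E),
      ((fun K => varS (d1 K) (fun s : {ffun 'I_K -> bool} =>
          \sum_(i < K) \sum_(j < K) (s i)%:R * (s j)%:R *
            fine (covariance (P K) (fun t => pi K i * W K i t)
                                   (fun t => pi K j * W K j t)))) @ \oo --> 0)
      /\
      ((fun K => varS (d1 K) (fun s : {ffun 'I_K -> bool} =>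
          \sum_(i < K) \sum_(j < K) (1 - (s i)%:R) * (1 - (s j)%:R) *
            fine (covariance (P K) (fun t => pi K i * W K i t)
                                   (fun t => pi K j * W K j t)))) @ \oo --> 0)
    & (exists l : R,
        (fun K => fine (\sum_(0 <= i < K) 'V_(P K)[(fun t => pi K i * W K i t)%R])%E
                  / fine ('V_(P K)[(fun t => \sum_(0 <= i < K) pi K i * W K i t)%R]))
        @ \oo --> l)].
Proof.
move=> hL2 hd1 _ _ _ hMA1 hrho [C hC] [l hl] [eps [heps hMA4]].
have hc : forall K i j, (i < K)%N -> (j < K)%N ->
    covariance (P K) (W K i) (W K j) = (c0 rho i j)%:E.
  by move=> K i j hi hj; rewrite hMA1.
have hV : forall K, 'V_(P K)[(fun t => \sum_(0 <= i < K) pi K i * W K i t)%R] = (VV rho (pi K) K)%:E.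
  by move=> K; apply: VV_prob; [exact: hL2 K | exact: hc K].
have hA : forall K, (\sum_(0 <= i < K) 'V_(P K)[(fun t => pi K i * W K i t)%R])%E = (AA (pi K) K)%:E.
  by move=> K; apply: (@AA_prob R d (T K) (P K) (W K) (pi K) rho K); [exact: hL2 K | exact: hc K].
have hVeq : forall K, VV rho (pi K) K = AA (pi K) K + 2 * rho * BB (pi K) K.
  by move=> K; exact: VV_eq.
have hrho' : - 2^-1 < rho < 2^-1 by rewrite -ltr_norml.
have C0 : 0 <= C.
  have := hC 1%N 0%N erefl; rewrite sqrtr1 divr1; apply: le_trans; exact: normr_ge0.
have hpp : forall K i j, (i < K)%N -> (j < K)%N -> `|pi K i * pi K j| <= C ^+ 2 / K%:R.
  move=> K i j hi hj; rewrite normrM.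
  have hK : (0 < K)%N by lia.
  have e : C ^+ 2 / K%:R = (C / Num.sqrt K%:R) * (C / Num.sqrt K%:R).
    by rewrite -expr2 expr_div_n sqr_sqrtr // ler0n.
  rewrite e; apply: ler_pM => //; exact: hC.
have hA0 : forall K, 0 <= AA (pi K) K.
  by move=> K; apply: sumr_ge0 => i _; exact: sqr_ge0.
have hAle : forall K, AA (pi K) K <= C ^+ 2.
  case=> [|K]; first by rewrite /AA big_nil sqr_ge0.
  apply: (le_trans (y := \sum_(0 <= i < K.+1) C ^+ 2 / K.+1%:R)).
    apply: ler_sum_nat => i /andP[_ hi]; have := hpp _ _ _ hi hi.
    by apply: le_trans; rewrite expr2; exact: ler_norm.
  by rewrite sumr_const_nat subn0 -(mulr_natr (C ^+ 2 / K.+1%:R) K.+1) divfK // pnatr_eq0.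
have rhoB : forall K, `|rho * BB (pi K) K| <= 2^-1 * AA (pi K) K.
  move=> K; rewrite normrM; apply: ler_pM => //; [exact: ltW | exact: BB_le].
have rhoB' : forall K, `|rho * BB (pi K) K| <= `|rho| * AA (pi K) K.
  by move=> K; rewrite normrM; apply: ler_wpM2l => //; exact: BB_le.
have hVle : forall K, VV rho (pi K) K <= 2 * C ^+ 2.
  move=> K; rewrite hVeq -mulrA; have := rhoB K; have := hAle K; have := hA0 K.
  rewrite ler_norml; move: (rho * BB (pi K) K) (AA (pi K) K) (C ^+ 2) => y a c h1 h2 /andP[h3 h4].
  lra.
split.
- exists eps, (2 * C ^+ 2); split => //; split.
    have := hMA4 1%N erefl; rewrite hV lte_fin => h; exact: (le_trans (ltW h) (hVle 1%N)).
  move=> K hK; rewrite hV !lee_fin; apply/andP; split; last exact: hVle.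
  by have := hMA4 K hK; rewrite hV lte_fin => /ltW.
- have hcc : forall K (i j : 'I_K), `|fine (covariance (P K) (fun t => pi K i * W K i t) (fun t => pi K j * W K j t))| <= C ^+ 2 / K%:R * band R K i j.
    move=> K i j; rewrite cov_scale; [|exact: hL2|exact: hL2].
    rewrite (hc K i j (ltn_ord i) (ltn_ord j)) -EFinM /= normrM.
    apply: ler_pM; [exact: normr_ge0 | exact: normr_ge0 | exact: hpp | exact: c0_band].
  have hlim : (fun K => 936 * (C ^+ 2) ^+ 2 * harmonic K) @ \oo --> (0:R).
    rewrite -(mulr0 (936 * (C ^+ 2) ^+ 2)).
    exact: (@cvgMl_tmp _ _ (\oo) _ (fun K => harmonic K) _ 0 cvg_harmonic).
  split.
    apply: (squeeze_cvgr _ (cvg_cst 0) hlim).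
    near=> K; apply/andP; split; first exact: varS_ge0.
    have hK8 : (8 <= K)%N by near: K; exact: nbhs_infty_ge.
    exact: (@P2_bound R K (d1 K) _ (C ^+ 2) hK8 (hd1 K) (sqr_ge0 C) (hcc K)).1.
  apply: (squeeze_cvgr _ (cvg_cst 0) hlim).
  near=> K; apply/andP; split; first exact: varS_ge0.
  have hK8 : (8 <= K)%N by near: K; exact: nbhs_infty_ge.
  exact: (@P2_bound R K (d1 K) _ (C ^+ 2) hK8 (hd1 K) (sqr_ge0 C) (hcc K)).2.
- pose x := fun K => rho * BB (pi K) K / AA (pi K) K.
  have xb : forall K, `|x K| <= `|rho|.
    move=> K; rewrite /x; have [->|hA'] := eqVneq (AA (pi K) K) 0; first by rewrite invr0 mulr0 normr0.
    have Apos : 0 < AA (pi K) K by rewrite lt0r hA' hA0.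
    rewrite normrM normfV (gtr0_norm Apos) ler_pdivrMr //; exact: rhoB'.
  have hl' : (fun K => (x K)%:E) @ \oo --> l by exact: hl.
  have lge : ((- `|rho|)%:E <= l)%E.
    apply: (cvge_ge _ hl'); apply: nearW => K; rewrite lee_fin; have := xb K; rewrite ler_norml => /andP[] //.
  have lle : (l <= `|rho|%:E)%E.
    apply: (cvge_le _ hl'); apply: nearW => K; rewrite lee_fin; have := xb K; rewrite ler_norml => /andP[] //.
  move: l hl' lge lle {hl} => [l'| |] hl' lge lle; last 2 first.
      by move: lle; rewrite leye_eq.
    by move: lge; rewrite leeNy_eq.
  have hx : x @ \oo --> l' := fine_cvg hl'.
  rewrite lee_fin in lge.
  have hden : 1 + 2 * l' != 0.
    apply: lt0r_neq0; have := hrho; rewrite ltr_norml => /andP[h1 h2].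
    have : - `|rho| <= - rho by rewrite lerN2 ler_norm.
    have : - `|rho| <= rho by rewrite lerNl ler_normr lexx orbT.
    have : `|rho| < 2^-1 by [].
    lra.
  exists ((1 + 2 * l')^-1).
  have hg : (fun K => (1 + 2 * x K)^-1) @ \oo --> (1 + 2 * l')^-1.
    apply: cvgV => //; apply: cvgD; first exact: cvg_cst.
    apply: (@cvgMl_tmp _ _ (\oo) _ x). exact: hx.
  apply: (cvg_trans _ hg); apply: near_eq_cvg; near=> K.
  have hK : (1 <= K)%N by near: K; exact: nbhs_infty_ge.
  rewrite hA hV /= hVeq /x.
  have := hMA4 K hK; rewrite hV lte_fin hVeq => hVp.
  have := rhoB K; rewrite ler_norml => /andP[h1 h2].
  have Apos : 0 < AA (pi K) K.
    move: hVp h1 h2; rewrite -mulrA; move: (rho * BB (pi K) K) => y; lra.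
  field; apply/andP; split; apply: lt0r_neq0 => //.
  exact: (lt_trans heps hVp).
Unshelve. all: by end_near.
Qed.
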